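(* Let $K$ be a field with an absolute value $v$, and let $\mathbb{C}_v$ denote the completion of an algebraic closure of $K$. Let $\phi(z)\in K[z]$ be a polynomial of degree $d\geq 2$, and let $\hat{\lambda}_{v,\phi}$ be the associated local canonical height. Write $\phi(z)=a_d z^d+\cdots+a_1 z+a_0=a_d(z-\alpha_1)\cdots(z-\alpha_d)$ with $a_i\in K$, $a_d\neq 0$, and $\alpha_i\in\mathbb{C}_v$. Let $A=\max\{|\alpha_i|_v : i=1,\ldots,d\}$ and $B=|a_d|_v^{-1/d}$, and define real constants $c_v,C_v\geq 1$ by $$c_v=\max\{1,A,B\}\quad\text{and}\quad C_v=\max\{1,|a_0|_v,|a_1|_v,\ldots,|a_d|_v\}$$ if $v$ is non-archimedean, or $$c_v=\max\{1,A+B\}\quad\text{and}\quad C_v=\max\{1,|a_0|_v+|a_1|_v+\cdots+|a_d|_v\}$$ if $v$ is archimedean. Then for all $x\in\mathbb{C}_v$, $$\frac{-d\log c_v}{d-1}\leq \hat{\lambda}_{v,\phi}(x)-\lambda_v(x)\leq \frac{\log C_v}{d-1}.$$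
   Context: The standard local height is $\lambda_v:\mathbb{C}_v\to[0,\infty)$, $\lambda_v(x)=\log\max\{1,|x|_v\}$. For a polynomial $\phi\in K[z]$ of degree $d\geq 2$, the local canonical height is $\hat{\lambda}_{v,\phi}(x)=\lim_{n\to\infty}d^{-n}\lambda_v(\phi^n(x))$ for $x\in\mathbb{C}_v$ (this limit exists), where $\phi^n$ denotes the $n$-th iterate of $\phi$ under composition. *)

(* Defs.v *)
From HB Require Import structures.
From mathcomp Require Import all_boot all_order all_algebra.
From mathcomp Require Import all_classical all_reals all_analysis.
Set Implicit Arguments. Unset Strict Implicit. Unset Printing Implicit Defensive.
Import Order.TTheory GRing.Theory Num.Theory.
Import numFieldNormedType.Exports.
Local Open Scope ring_scope.

Definition is_absval (R : realType) (F : fieldType) (av : F -> R) : Prop :=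
  [/\ forall x, 0 <= av x,
      forall x, av x = 0 <-> x = 0,
      forall x y, av (x * y) = av x * av y
    & forall x y, av (x + y) <= av x + av y].

Definition nonarch (R : realType) (F : fieldType) (av : F -> R) : Prop :=
  forall x y, av (x + y) <= Num.max (av x) (av y).

Definition av_complete (R : realType) (F : fieldType) (av : F -> R) : Prop :=
  forall u : nat -> F,
    (forall e : R, 0 < e -> exists N, forall m n, (N <= m)%N -> (N <= n)%N ->
        av (u m - u n) < e) ->
    exists l : F, forall e : R, 0 < e -> exists N, forall n, (N <= n)%N ->
        av (u n - l) < e.

Definition algebraic_over (K L : fieldType) (s : {rmorphism K -> L}) (y : L) : Prop :=
  exists p : {poly K}, p != 0 /\ root (map_poly s p) y.

(* L is (isomorphic to) C_v: an algebraically closed field with absolute value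
   av, complete, extending (K, av \o s), in which the algebraic closure of K is dense. *)
Definition is_Cv (R : realType) (K : fieldType) (L : closedFieldType)
    (s : {rmorphism K -> L}) (av : L -> R) : Prop :=
  [/\ is_absval av, av_complete av &
      forall x : L, forall e : R, 0 < e ->
        exists y : L, algebraic_over s y /\ av (x - y) < e].

Definition loc_height (R : realType) (L : fieldType) (av : L -> R) (x : L) : R :=
  ln (Num.max 1 (av x)).

Definition can_height (R : realType) (L : fieldType) (av : L -> R)
    (phi : {poly L}) (x : L) : R :=
  limn (fun n : nat => ((size phi).-1%:R ^- n) * loc_height av (iter n (fun z => phi.[z]) x)).

(* Main.v *)
Require Import Defs.
From HB Require Import structures.
From mathcomp Require Import all_boot all_order all_algebra.
From mathcomp Require Import all_classical all_reals all_analysis.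
From mathcomp Require Import ring lra.
Import Order.TTheory GRing.Theory Num.Theory.
Import numFieldNormedType.Exports.
Local Open Scope ring_scope.

Section AV.
Variables (R : realType) (L : fieldType) (av : L -> R).
Hypothesis hav : is_absval av.

Lemma av_ge0 x : 0 <= av x. Proof. by case: hav. Qed.
Lemma av0 : av 0 = 0. Proof. by case: hav => _ h _ _; apply/h. Qed.
Lemma av_eq0 x : av x = 0 <-> x = 0. Proof. by case: hav. Qed.
Lemma avM x y : av (x * y) = av x * av y. Proof. by case: hav. Qed.
Lemma avD x y : av (x + y) <= av x + av y. Proof. by case: hav. Qed.
Lemma av1 : av 1 = 1.
Proof.
have h := avM 1 1; rewrite mulr1 in h.
have n0 : av 1 != 0 by apply/eqP => /av_eq0/eqP; rewrite oner_eq0.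
by apply: (mulfI n0); rewrite -h mulr1.
Qed.
Lemma avN x : av (- x) = av x.
Proof.
have h := avM (-1) (-1); rewrite mulrNN mulr1 av1 in h.
have h0 := av_ge0 (-1).
have e : av (-1) = 1 by nra.
by rewrite -mulN1r avM e mul1r.
Qed.
Lemma avX x n : av (x ^+ n) = av x ^+ n.
Proof. by elim: n => [|n IH]; rewrite ?expr0 ?av1 // !exprS avM IH. Qed.
Lemma av_sub x y : av x - av y <= av (x - y).
Proof. have := avD (x - y) y; rewrite subrK; lra. Qed.
Lemma av_sum n (F : 'I_n -> L) : av (\sum_(i < n) F i) <= \sum_(i < n) av (F i).
Proof.
elim/big_rec2: _ => [|i y1 y2 _ h]; first by rewrite av0.
by apply: le_trans (avD _ _) _; rewrite lerD2l.
Qed.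
Lemma av_prod (I : Type) (r : seq I) (F : I -> L) :
  av (\prod_(a <- r) F a) = \prod_(a <- r) av (F a).
Proof. by apply: (big_morph av avM av1). Qed.

Lemma bernoulli (h : R) n : 0 <= h -> 1 + n%:R * h <= (1 + h) ^+ n.
Proof.
move=> h0; elim: n => [|n IH]; first by rewrite mul0r addr0 expr0.
rewrite exprS -natr1.
have e : 0 <= (1 + h) by lra.
set p := (1 + h) ^+ n in IH *.
have n0 : 0 <= n%:R :> R by [].
set N := n%:R in IH n0 *.
nra.
Qed.

Lemma nonarch_lift : (forall n : nat, av (n%:R) <= 1) -> nonarch av.
Proof.
move=> hn x y; set M := Num.max (av x) (av y); set t := av (x + y).
have M0 : 0 <= M by rewrite le_max av_ge0.
have hx : av x <= M by rewrite le_max lexx.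
have hy : av y <= M by rewrite le_max lexx orbT.
have key : forall n, t ^+ n <= n.+1%:R * M ^+ n.
  move=> n; rewrite /t -avX exprDn.
  eapply le_trans; first exact: av_sum.
  have -> : n.+1%:R * M ^+ n = \sum_(i < n.+1) M ^+ n.
    by rewrite sumr_const card_ord mulr_natl.
  apply: ler_sum => i _.
  rewrite -mulr_natr avM.
  have hi : (i <= n)%N by rewrite -ltnS.
  apply: (@le_trans _ _ (av (x ^+ (n - i) * y ^+ i))).
    by rewrite -[X in _ <= X]mulr1 ler_wpM2l ?av_ge0.
  rewrite avM !avX.
  have -> : M ^+ n = M ^+ (n - i) * M ^+ i by rewrite -exprD subnK.
  by apply: ler_pM; rewrite ?exprn_ge0 ?av_ge0 // lerXn2r ?nnegrE ?av_ge0.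
have t0 : 0 <= t by apply: av_ge0.
rewrite leNgt; apply/negP => tM.
have [M00|Mp] := eqVneq M 0.
  have := key 1%N; rewrite M00 !expr1 mulr0; lra.
have Mp' : 0 < M by rewrite lt_def Mp M0.
set r := t / M.
have r1 : 1 < r by rewrite /r ltr_pdivlMr // mul1r.
have kr : forall n, r ^+ n <= n.+1%:R.
  move=> n; rewrite /r expr_div_n ler_pdivrMr ?exprn_gt0 //; exact: key.
set h := r - 1.
have h0 : 0 < h by rewrite /h subr_gt0.
have h20 : 0 < h * h by rewrite mulr_gt0.
pose n := (Num.Def.archi_bound (3 / (h * h))).+1.
have nb : 3 / (h * h) < n%:R.
  apply: lt_trans (archi_boundP _) _; first by rewrite divr_ge0 // ltW.
  by rewrite ltr_nat.
have nb' : 3 < n%:R * (h * h) by rewrite -ltr_pdivrMr.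
have n1 : 1 <= n%:R :> R by rewrite ler1n.
have b := @bernoulli h n (ltW h0).
have k2 := kr (n + n)%N.
rewrite exprD -natr1 natrD in k2.
have e1 : 1 + h = r by rewrite /h; ring.
rewrite e1 in b.
set N := n%:R in nb' n1 b k2.
set P := r ^+ n in b k2.
have q1 : N * h <= P by nra.
have q0 : 0 <= N * h by nra.
have q2 : (N * h) * (N * h) <= P * P by apply: ler_pM.
have q3 : 3 * N < N * (N * (h * h)) by nra.
have e2 : N * (N * (h * h)) = (N * h) * (N * h) by ring.
lra.
Qed.


Lemma expr_mono (m : R) i n : 1 <= m -> (i <= n)%N -> m ^+ i <= m ^+ n.
Proof.
move=> m1 hi; rewrite -(subnK hi) exprD ler_peMl ?exprn_ge0 ?exprn_ege1 //.
lra.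
Qed.

Lemma av_sum_na (n : nat) (F : 'I_n -> L) (X : R) : nonarch av -> 0 <= X ->
  (forall i, av (F i) <= X) -> av (\sum_(i < n) F i) <= X.
Proof.
move=> na X0 hF; elim/big_rec: _ => [|i y _ h]; first by rewrite av0.
by apply: le_trans (na _ _) _; rewrite ge_max hF h.
Qed.

Lemma upper_arch (p : {poly L}) d (C : R) : size p = d.+1 ->
  \sum_(i < d.+1) av p`_i <= C -> 1 <= C ->
  forall y, Num.max 1 (av p.[y]) <= C * Num.max 1 (av y) ^+ d.
Proof.
move=> hs hC C1 y; set m := Num.max 1 (av y).
have m1 : 1 <= m by rewrite le_max lexx.
have m0 : 0 <= m by apply: le_trans m1.
have ym : av y <= m by rewrite /m le_max lexx orbT.
have md : 1 <= m ^+ d by apply: exprn_ege1.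
rewrite ge_max; apply/andP; split.
  by rewrite -(mulr1 1) ler_pM.
rewrite horner_coef hs.
eapply le_trans; first exact: av_sum.
apply: (@le_trans _ _ (\sum_(i < d.+1) av p`_i * m ^+ d)).
  apply: ler_sum => i _; rewrite avM avX ler_wpM2l ?av_ge0 //.
  apply: (le_trans _ (@expr_mono m i d m1 (ltnSE (ltn_ord i)))).
  by rewrite lerXn2r ?nnegrE ?av_ge0.
by rewrite -mulr_suml ler_wpM2r ?exprn_ge0.
Qed.

Lemma upper_na (p : {poly L}) d (C : R) : nonarch av -> size p = d.+1 ->
  (forall i, (i < d.+1)%N -> av p`_i <= C) -> 1 <= C ->
  forall y, Num.max 1 (av p.[y]) <= C * Num.max 1 (av y) ^+ d.
Proof.
move=> na hs hC C1 y; set m := Num.max 1 (av y).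
have m1 : 1 <= m by rewrite le_max lexx.
have m0 : 0 <= m by apply: le_trans m1.
have ym : av y <= m by rewrite /m le_max lexx orbT.
have md : 1 <= m ^+ d by apply: exprn_ege1.
rewrite ge_max; apply/andP; split.
  by rewrite -(mulr1 1) ler_pM.
rewrite horner_coef hs.
apply: av_sum_na => //; first by rewrite mulr_ge0 ?exprn_ge0 // (le_trans ler01 C1).
move=> i; rewrite avM avX; apply: ler_pM; rewrite ?av_ge0 ?exprn_ge0 //.
  exact: av_ge0. exact: hC (ltn_ord i).
apply: (le_trans _ (@expr_mono m i d m1 (ltnSE (ltn_ord i)))).
by rewrite lerXn2r ?nnegrE ?av_ge0.
Qed.

Lemma prod_ge (alpha : seq L) (y : L) (t : R) : 0 <= t ->
  (forall a, a \in alpha -> t <= av (y - a)) ->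
  t ^+ size alpha <= \prod_(a <- alpha) av (y - a).
Proof.
move=> t0; elim: alpha => [|a al IH] h; first by rewrite big_nil expr0.
rewrite big_cons /= exprS; apply: ler_pM; rewrite ?exprn_ge0 //.
  by apply: h; rewrite in_cons eqxx.
by apply: IH => b hb; apply: h; rewrite in_cons hb orbT.
Qed.

Lemma lower_gen (alpha : seq L) (lc : L) (p : {poly L}) d (c B : R) :
  p = lc *: \prod_(a <- alpha) ('X - a%:P) -> size alpha = d ->
  1 <= c -> 0 <= B -> B ^+ d * av lc = 1 ->
  (forall y, c < av y -> exists t, [/\ 0 <= t, B * av y <= c * t &
       forall a, a \in alpha -> t <= av (y - a)]) ->
  forall y, Num.max 1 (av y) ^+ d <= c ^+ d * Num.max 1 (av p.[y]).
Proof.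
move=> hp hs c1 B0 hB ht y.
have c0 : 0 <= c by lra.
have cd1 : 1 <= c ^+ d by apply: exprn_ege1.
have M1 : 1 <= Num.max 1 (av p.[y]) by rewrite le_max lexx.
case: (leP (av y) c) => hy.
  apply: (@le_trans _ _ (c ^+ d)).
    have m0 : 0 <= Num.max 1 (av y) by rewrite le_max ler01.
    by rewrite lerXn2r ?nnegrE // ge_max c1 hy.
  by rewrite ler_peMr // (le_trans _ cd1).
have my : Num.max 1 (av y) = av y by apply/max_idPr; lra.
rewrite my.
have [t [t0 hBt hta]] := ht y hy.
apply: (@le_trans _ _ (c ^+ d * av p.[y])); last first.
  by rewrite ler_wpM2l ?exprn_ge0 // le_max lexx orbT.
rewrite hp hornerZ horner_prod avM.
under eq_bigr do rewrite hornerXsubC.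
rewrite av_prod.
have hpr := @prod_ge alpha y t t0 hta; rewrite hs in hpr.
apply: (@le_trans _ _ (c ^+ d * (av lc * t ^+ d))); last first.
  by rewrite ler_wpM2l ?exprn_ge0 // ler_wpM2l ?av_ge0.
have e : c ^+ d * (av lc * t ^+ d) = av lc * (c * t) ^+ d.
  by rewrite exprMn mulrA (mulrC (c ^+ d)) -mulrA.
rewrite e.
have hBt' : (B * av y) ^+ d <= (c * t) ^+ d.
  by rewrite lerXn2r ?nnegrE ?mulr_ge0 ?av_ge0.
apply: (@le_trans _ _ (av lc * (B * av y) ^+ d)); last first.
  by rewrite ler_wpM2l ?av_ge0.
by rewrite exprMn mulrA (mulrC (av lc)) hB mul1r.
Qed.

End AV.
Lemma seq_bounds (R : realType) (T : Type) (f : T -> T) (H : T -> R)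
   (d : nat) (a b : R) :
  (1 < d)%N -> 0 <= a -> 0 <= b -> (forall y, 0 <= H y) ->
  (forall y, H (f y) <= a + d%:R * H y) ->
  (forall y, d%:R * H y - b <= H (f y)) ->
  forall x, let u := fun n : nat => d%:R ^- n * H (iter n f x) in
  cvgn u /\
  - b / (d%:R - 1) <= limn u - H x /\ limn u - H x <= a / (d%:R - 1).
Proof.
move=> d1 a0 b0 H0 Hup Hlo x u.
set D := d%:R.
have D1 : 1 < D by rewrite /D ltr1n.
have D0 : 0 < D by lra.
have Dm1 : 0 < D - 1 by lra.
have Dn0 : forall n, 0 < D ^- n by move=> n; rewrite invr_gt0 exprn_gt0.
have DS : forall n, D ^- n = D * D ^- n.+1.
  by move=> n; rewrite exprS invfM mulrA mulfV ?mul1r //; lra.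
have u0 : forall n, 0 <= u n by move=> n; rewrite /u mulr_ge0 // ltW.
have stepU : forall n, u n.+1 <= u n + a * D ^- n.+1.
  move=> n; rewrite /u iterS.
  apply: (le_trans (ler_wpM2l (ltW (Dn0 _)) (Hup _))).
  rewrite (DS n) -mulrA.
  set t := D ^- n.+1; set Hy := H _.
  by rewrite le_eqVlt; apply/orP; left; apply/eqP; ring.
have stepL : forall n, u n - b * D ^- n.+1 <= u n.+1.
  move=> n; rewrite /u iterS.
  apply: le_trans (ler_wpM2l (ltW (Dn0 _)) (Hlo _)).
  rewrite (DS n) -mulrA.
  set t := D ^- n.+1; set Hy := H _.
  by rewrite le_eqVlt; apply/orP; left; apply/eqP; ring.
pose q n := u n + a / (D - 1) * D ^- n.
pose r n := u n - b / (D - 1) * D ^- n.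
have qS : forall n, q n.+1 <= q n.
  move=> n; rewrite /q (DS n); have := stepU n.
  set t := D ^- n.+1; set un := u n; set un1 := u n.+1 => h.
  have -> : un + a / (D - 1) * (D * t) = un + a * t + a / (D - 1) * t.
    by field; lra.
  by lra.
have rS : forall n, r n <= r n.+1.
  move=> n; rewrite /r (DS n); have := stepL n.
  set t := D ^- n.+1; set un := u n; set un1 := u n.+1 => h.
  have -> : un - b / (D - 1) * (D * t) = un - b * t - b / (D - 1) * t.
    by field; lra.
  by lra.
have qdec : {homo q : n m / (n <= m)%N >-> m <= n}.
  apply: (homo_leq (r := fun x y => y <= x)) => //.
  by move=> ? ? ? h1 h2; apply: le_trans h2 h1.
have rinc : {homo r : n m / (n <= m)%N >-> n <= m}.
  apply: (homo_leq (r := fun x y => x <= y)) => //.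
  by move=> ? ? ? h1 h2; apply: le_trans h1 h2.
have cvgg : forall k : R, cvgn (fun n => k * D ^- n).
  move=> k.
  have -> : (fun n => k * D ^- n) = (fun n => k * (D^-1) ^+ n).
    by apply/funext => n; rewrite exprVn.
  apply: is_cvgM; first exact: is_cvg_cst.
  apply: cvgP (cvg_expr _).
  by rewrite ger0_norm ?invr_ge0 ?(ltW D0) // invf_lt1.
have qlb : has_lbound (range q).
  exists 0 => _ [n _ <-].
  by rewrite /q addr_ge0 ?u0 // mulr_ge0 ?divr_ge0 ?(ltW (Dn0 _)) ?(ltW Dm1).
have cq : cvgn q by exact: nonincreasing_is_cvgn.
have ueq : u = q - (fun n => a / (D - 1) * D ^- n).
  by apply/funext => n; rewrite /q /= addrK.
have cu : cvgn u by rewrite ueq; apply: is_cvgB.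
have limuq : limn u = limn q.
  rewrite ueq limB; last exact: cvgg. 2: exact: cq.
  suff -> : limn (fun n => a / (D - 1) * D ^- n) = 0 by rewrite subr0.
  apply: cvg_lim => //.
  have -> : (fun n => a / (D - 1) * D ^- n) = (fun n => a / (D - 1) * (D^-1) ^+ n).
    by apply/funext => n; rewrite exprVn.
  rewrite -(mulr0 (a / (D - 1))).
  apply: cvgMr.
  apply: cvg_expr.
  by rewrite ger0_norm ?invr_ge0 ?(ltW D0) // invf_lt1.
have rur : r = u - (fun n => b / (D - 1) * D ^- n).
  by apply/funext.
have cr : cvgn r by rewrite rur; apply: is_cvgB => //; exact: cvgg.
have limur : limn u = limn r.
  rewrite rur limB; last exact: cvgg. 2: exact: cu.
  suff -> : limn (fun n => b / (D - 1) * D ^- n) = 0 by rewrite subr0.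
  apply: cvg_lim => //.
  have -> : (fun n => b / (D - 1) * D ^- n) = (fun n => b / (D - 1) * (D^-1) ^+ n).
    by apply/funext => n; rewrite exprVn.
  rewrite -(mulr0 (b / (D - 1))).
  apply: cvgMr.
  apply: cvg_expr.
  by rewrite ger0_norm ?invr_ge0 ?(ltW D0) // invf_lt1.
have u0H : u 0%N = H x by rewrite /u expr0 invr1 mul1r.
split => //; split.
- have := nondecreasing_cvgn_le rinc cr 0%N.
  rewrite -limur /r u0H expr0 invr1 mulr1.
  rewrite mulNr; lra.
- have := nonincreasing_cvgn_ge qdec cq 0%N.
  rewrite -limuq /q u0H expr0 invr1 mulr1; lra.
Qed.

Arguments av_ge0 {R L av}. Arguments av0 {R L av}. Arguments av_eq0 {R L av}.
Arguments avM {R L av}. Arguments avD {R L av}. Arguments av1 {R L av}.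
Arguments av_sub {R L av}. Arguments nonarch_lift {R L av}.

Lemma ln_le (R : realType) (x y : R) : 0 < x -> x <= y -> ln x <= ln y.
Proof.
by move=> x0 xy; rewrite ler_ln // posrE (lt_le_trans x0).
Qed.

Theorem proposition2p1 (R : realType) (K : fieldType) (L : closedFieldType)
    (s : {rmorphism K -> L}) (av : L -> R) (d : nat) (phi : {poly K})
    (alpha : seq L) :
  is_Cv s av ->
  (2 <= d)%N ->
  size phi = d.+1 ->
  map_poly s phi = s (lead_coef phi) *: \prod_(a <- alpha) ('X - a%:P) ->
  let A := \big[Num.max/0]_(a <- alpha) av a in
  let B := av (s (lead_coef phi)) `^ (- (d%:R)^-1) in
  let c := if `[< nonarch (av \o s) >]
           then Num.max 1 (Num.max A B) else Num.max 1 (A + B) in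
  let C := if `[< nonarch (av \o s) >]
           then \big[Num.max/1]_(i < d.+1) av (s phi`_i)
           else Num.max 1 (\sum_(i < d.+1) av (s phi`_i)) in
  forall x : L,
    - (d%:R * ln c) / (d%:R - 1) <= can_height av (map_poly s phi) x - loc_height av x
    /\ can_height av (map_poly s phi) x - loc_height av x <= ln C / (d%:R - 1).
Proof.
move=> [hav _ _] d2 hsz hfac A B c C x.
set p := map_poly s phi.
have hps : size p = d.+1 by rewrite /p size_map_poly.
have phi0 : phi != 0 by rewrite -size_poly_eq0 hsz.
have lc0 : s (lead_coef phi) != 0 by rewrite fmorph_eq0 lead_coef_eq0.
have hal : size alpha = d.
  have := hps; rewrite /p hfac size_scale // size_prod_XsubC.
  by move=> [].
have d0 : (0 < d)%N by apply: leq_trans d2.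
have A0 : 0 <= A by rewrite /A; elim/big_rec: _ => // i z _ h; rewrite le_max h orbT.
have Aa : forall a, a \in alpha -> av a <= A.
  by move=> a ha; rewrite /A; apply: (le_bigmax_seq _ _ xpredT).
set beta := av (s (lead_coef phi)).
have beta0 : 0 < beta.
  by rewrite lt_def av_ge0 // andbT; apply/eqP => /(av_eq0 hav) /eqP; apply/negP.
have B0 : 0 <= B by apply: powR_ge0.
have hB : B ^+ d * beta = 1.
  rewrite -powR_mulrn // /B -powRrM mulNr mulVf ?pnatr_eq0 -?lt0n //.
  have := @powR_invn R beta 1 (ltW beta0); rewrite mulr1n => ->.
  by rewrite expr1 mulVf // gt_eqF.
have coef : forall i, p`_i = s phi`_i by move=> i; rewrite coef_map.
have [C1 Cup] : 1 <= C /\ forall y, Num.max 1 (av p.[y]) <= C * Num.max 1 (av y) ^+ d.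
  rewrite /C; case: asboolP => hna.
    have naL : nonarch av.
      apply: (nonarch_lift hav) => n.
      rewrite -(rmorph_nat s).
      elim: n => [|n IH]; first by rewrite mulr0n rmorph0 (av0 hav) ler01.
      rewrite -addn1 natrD.
      apply: le_trans (hna _ _) _; rewrite ge_max IH /= rmorph1 (av1 hav) lexx //.
    have C1 : 1 <= \big[Num.max/1]_(i < d.+1) av (s phi`_i).
      by elim/big_rec: _ => // i z _ h; rewrite le_max h orbT.
    split => //; apply: (@upper_na _ _ _ hav p d _ naL hps) => // i hi.
    rewrite coef.
    exact: (le_bigmax _ (fun i : 'I_d.+1 => av (s phi`_i)) (Ordinal hi)).
  have C1 : 1 <= Num.max 1 (\sum_(i < d.+1) av (s phi`_i)) by rewrite le_max lexx.
  split => //; apply: (@upper_arch _ _ _ hav p d _ hps) => //.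
  under eq_bigr do rewrite coef.
  by rewrite le_max lexx orbT.
have [c1 Clo] : 1 <= c /\ forall y, Num.max 1 (av y) ^+ d <= c ^+ d * Num.max 1 (av p.[y]).
  have hfac' : p = s (lead_coef phi) *: \prod_(a <- alpha) ('X - a%:P) by [].
  rewrite /c; case: asboolP => hna.
    have naL : nonarch av.
      apply: (nonarch_lift hav) => n.
      rewrite -(rmorph_nat s).
      elim: n => [|n IH]; first by rewrite mulr0n rmorph0 (av0 hav) ler01.
      rewrite -addn1 natrD.
      apply: le_trans (hna _ _) _; rewrite ge_max IH /= rmorph1 (av1 hav) lexx //.
    set cc := Num.max 1 (Num.max A B).
    have cc1 : 1 <= cc by rewrite le_max lexx.
    have ccA : A <= cc by rewrite /cc !le_max lexx orbT.
    have ccB : B <= cc by rewrite /cc !le_max lexx !orbT.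
    split => //; apply: (@lower_gen _ _ _ hav _ _ _ _ _ B hfac' hal) => // y hy.
    exists (av y); split; first exact: av_ge0.
      by rewrite ler_wpM2r ?av_ge0.
    move=> a ha.
    have := naL (y - a) a; rewrite subrK.
    have := Aa a ha => h1 h2.
    rewrite leNgt; apply/negP => h3.
    have hay : av a < av y by lra.
    have : Num.max (av (y - a)) (av a) < av y by rewrite gt_max h3 hay.
    lra.
  set cc := Num.max 1 (A + B).
  have cc1 : 1 <= cc by rewrite le_max lexx.
  have ccAB : A + B <= cc by rewrite /cc le_max lexx orbT.
  split => //; apply: (@lower_gen _ _ _ hav _ _ _ _ _ B hfac' hal) => // y hy.
  exists (av y - A); split.
  - lra.
  - nra.
  - move=> a ha; have := Aa a ha; have := av_sub hav y a; lra.
set h := fun y => loc_height av y.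
have h0 : forall y, 0 <= h y by move=> y; rewrite /h /loc_height ln_ge0 // le_max lexx.
have hup : forall y, h (p.[y]) <= ln C + d%:R * h y.
  move=> y; rewrite /h /loc_height.
  have m1 : 1 <= Num.max 1 (av y) by rewrite le_max lexx.
  have m0 : 0 < Num.max 1 (av y) by lra.
  apply: (le_trans (@ln_le R _ _ _ (Cup y))).
    by rewrite lt_max ltr01.
  rewrite lnM ?posrE ?exprn_gt0 //; last by lra.
  by rewrite lnXn // mulr_natl.
have hlo : forall y, d%:R * h y - d%:R * ln c <= h (p.[y]).
  move=> y; rewrite /h /loc_height.
  have m1 : 1 <= Num.max 1 (av y) by rewrite le_max lexx.
  have m0 : 0 < Num.max 1 (av y) by lra.
  have M0 : 0 < Num.max 1 (av p.[y]) by rewrite lt_max ltr01.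
  have c0 : 0 < c by lra.
  have := @ln_le R _ _ (exprn_gt0 d m0) (Clo y).
  rewrite lnM ?posrE ?exprn_gt0 // !lnXn // !mulr_natl; lra.
have lnC0 : 0 <= ln C by apply: ln_ge0.
have lnc0 : 0 <= d%:R * ln c by rewrite mulr_ge0 // ln_ge0.
have := @seq_bounds R L (fun z => p.[z]) h d (ln C) (d%:R * ln c) d2 lnC0 lnc0 h0 hup hlo x.
rewrite /can_height hps /=.
by move=> [_ [H1 H2]]; split.
Qed.
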